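(* For positive integers $k\le n$, $\theta_k(\ell_1,\ell_1)=1$; that is, $\max\{\|C_k(B)\|_1 : B\in\mathbb{C}^{n\times n},\ \|\mathrm{col}_i(B)\|_1=1,\ i=1,\ldots,n\}=1$.
   Context: $C_k(B)$ is the $k$th compound of $B$: the $\binom nk\times\binom nk$ matrix of all $k\times k$ minors $\det B(\alpha|\beta)$, indexed by $k$-subsets $\alpha,\beta$ of $\{1,\ldots,n\}$. $\mathrm{col}_i(B)$ is the $i$th column of $B$. For vectors $\|\cdot\|_1$ is the $\ell_1$ norm; for matrices $\|\cdot\|_1$ is the operator norm induced by the vector $\ell_1$ norm. $\theta_k(\mu,\nu)$ denotes $\max\{\mu(C_k(B)): \nu(\mathrm{col}_i(B))=1\ \forall i\}$. *)

(* Defs.v *)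
From HB Require Import structures.
From mathcomp Require Import all_boot all_order all_algebra.
From mathcomp Require Import complex.
From mathcomp Require Import reals.
Set Implicit Arguments. Unset Strict Implicit. Unset Printing Implicit Defensive.
Import Order.TTheory GRing.Theory Num.Theory.
Local Open Scope ring_scope.

Definition ksubset (n k : nat) := {A : {set 'I_n} | #|A| == k}.

Definition kenum n k (a : ksubset n k) : seq 'I_n := enum (val a).

(* The minor det B(alpha|beta): determinant of the k x k submatrix of B
   with rows alpha and columns beta, both in increasing order. *)
Definition minor (F : comNzRingType) n k (B : 'M[F]_n) (a b : ksubset n k) : F :=
  \det (\matrix_(i < k, j < k)
          nth 0 (nth [::] [seq [seq B r c | c <- kenum b] | r <- kenum a] i) j).

Definition compound (F : comNzRingType) n k (B : 'M[F]_n) : ksubset n k -> ksubset n k -> F :=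
  fun a b => minor B a b.

Definition l1norm (F : numDomainType) (I : finType) (x : I -> F) : F :=
  \sum_(i : I) `|x i|.

Definition mxapply (F : comNzRingType) (I : finType) (A : I -> I -> F) (x : I -> F) : I -> F :=
  fun a => \sum_(b : I) A a b * x b.

(* "The operator norm induced by the vector l1 norm of A equals c":
   ||A x||_1 <= c ||x||_1 for all x, with equality for some nonzero x. *)
Definition l1_opnorm_is (F : numDomainType) (I : finType) (A : I -> I -> F) (c : F) : Prop :=
  (forall x : I -> F, l1norm (mxapply A x) <= c * l1norm x) /\
  (exists x : I -> F, (exists i, x i != 0) /\ l1norm (mxapply A x) = c * l1norm x).

Definition cols_l1_unit (F : numDomainType) n (B : 'M[F]_n) : Prop :=
  forall j : 'I_n, \sum_(i < n) `|B i j| = 1.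
Arguments compound {F n} k B.

(* Main.v *)
Require Import Defs.
From HB Require Import structures.
From mathcomp Require Import all_boot all_order all_algebra.
From mathcomp Require Import complex.
From mathcomp Require Import reals.
From mathcomp Require Import fingroup perm.
Import Order.TTheory GRing.Theory Num.Theory.
Local Open Scope ring_scope.
Set Implicit Arguments. Unset Strict Implicit.

Lemma size_kenum n k (a : ksubset n k) : size (kenum a) = k.
Proof. by rewrite /kenum -cardE; apply/eqP; case: a. Qed.

Definition ai n k (x0 : 'I_n) (a : ksubset n k) (i : 'I_k) : 'I_n :=
  nth x0 (kenum a) i.

Lemma ai_inj n k x0 (a : ksubset n k) : injective (ai x0 a).
Proof.
move=> i j /eqP; rewrite /ai nth_uniq ?size_kenum ?ltn_ord ?enum_uniq //.
by move/eqP; apply: ord_inj.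
Qed.

Lemma ai_mem n k x0 (a : ksubset n k) i : ai x0 a i \in val a.
Proof. by rewrite /ai -mem_enum mem_nth // size_kenum ltn_ord. Qed.

Lemma ai_surj n k x0 (a : ksubset n k) x : x \in val a -> exists i, ai x0 a i = x.
Proof.
move=> hx.
have hi : (index x (kenum a) < k)%N by rewrite -[X in (_ < X)%N](size_kenum a) index_mem /kenum mem_enum.
by exists (Ordinal hi); rewrite /ai nth_index // /kenum mem_enum.
Qed.

Lemma minorE (F : comNzRingType) n k x0 (B : 'M[F]_n) (a b : ksubset n k) :
  minor B a b = \det (\matrix_(i, j) B (ai x0 a i) (ai x0 b j)).
Proof.
rewrite /minor; congr (\det _); apply/matrixP => i j; rewrite !mxE.
by rewrite (nth_map x0) ?size_kenum ?ltn_ord // (nth_map x0) ?size_kenum ?ltn_ord.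
Qed.

Lemma col_minor_bound (F : numFieldType) n k x0 (B : 'M[F]_n) (b : ksubset n k) :
  \sum_a `|minor B a b| <= \prod_(j < k) \sum_(r < n) `|B r (ai x0 b j)|.
Proof.
pose G := fun f : {ffun 'I_k -> 'I_n} => \prod_j `|B (f j) (ai x0 b j)|.
pose phi := fun p : (ksubset n k * 'S_k)%type => [ffun j => ai x0 p.1 (p.2 j)].
rewrite bigA_distr_bigA /=.
apply: le_trans (_ : \sum_p G (phi p) <= _).
  rewrite -(pair_bigA _ (fun a s => G (phi (a, s)))) /=; apply: ler_sum => a _.
  rewrite (minorE x0) -det_tr /determinant.
  apply: le_trans (ler_norm_sum _ _ _) _; apply: ler_sum => s _.
  rewrite normrM normr_sign mul1r normr_prod.
  rewrite le_eqVlt; apply/orP; left; apply/eqP; apply: eq_bigr => j _.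
  by rewrite !mxE /phi ffunE.
have inj : injective phi.
  move=> [a s] [a' s'] /= /ffunP E.
  have E' j : ai x0 a (s j) = ai x0 a' (s' j) by have := E j; rewrite !ffunE.
  have ea : a = a'.
    apply/val_inj/setP => x; apply/idP/idP => hx.
      case: (ai_surj x0 hx) => i <-.
      by rewrite -(permKV s i) E' ai_mem.
    case: (ai_surj x0 hx) => i <-.
    by rewrite -(permKV s' i) -E' ai_mem.
  subst a'; congr pair; apply/permP => j; exact: (ai_inj (E' j)).
have Eim : \sum_(f in [set phi p | p in predT]) G f = \sum_(p in predT) G (phi p).
  by apply: big_imset => p q _ _; apply: inj.
rewrite (bigID (mem [set phi p | p in predT])) /=.
have -> : \sum_p G (phi p) = \sum_(f in [set phi p | p in predT]) G f by rewrite Eim.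
rewrite lerDl; apply: sumr_ge0 => f _; apply: prodr_ge0 => j _; exact: normr_ge0.
Qed.

Lemma compound_l1 (F : numFieldType) n k (x0 : 'I_n) (B : 'M[F]_n)
  (hB : cols_l1_unit B) (x : ksubset n k -> F) :
  l1norm (mxapply (compound k B) x) <= l1norm x.
Proof.
rewrite /l1norm /mxapply.
apply: le_trans (_ : \sum_a \sum_b `|compound k B a b| * `|x b| <= _).
  apply: ler_sum => a _; apply: le_trans (ler_norm_sum _ _ _) _.
  by apply: ler_sum => b _; rewrite normrM.
rewrite exchange_big /=; apply: ler_sum => b _.
rewrite -mulr_suml; apply: ler_piMl => //.
apply: le_trans (col_minor_bound x0 B b) _.
by rewrite big1 // => j _; rewrite hB.
Qed.

Lemma minor1 (F : numFieldType) n k (x0 : 'I_n) (a b : ksubset n k) :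
  minor (1%:M : 'M[F]_n) a b = (a == b)%:R.
Proof.
rewrite (minorE x0); case: eqP => [<-|neq].
  transitivity (\det (1%:M : 'M[F]_k)); last by rewrite det1.
  by congr (\det _); apply/matrixP => i j; rewrite !mxE (inj_eq (@ai_inj _ _ x0 a)).
have : ~~ (val a \subset val b).
  apply/negP => sub; apply: neq; apply/val_inj/eqP.
  by rewrite eqEcard sub /= (eqP (valP a)) (eqP (valP b)).
case/subsetPn => x xa xb; case: (ai_surj x0 xa) => i0 ei.
rewrite (expand_det_row _ i0) big1 // => j _.
rewrite !mxE ei.
have : x != ai x0 b j by apply: contraNneq xb => ->; apply: ai_mem.
by move/negbTE => ->; rewrite mulr0n mul0r.
Qed.

Lemma compound1_l1 (F : numFieldType) n k (x0 : 'I_n) (x : ksubset n k -> F) :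
  l1norm (mxapply (compound k (1%:M : 'M[F]_n)) x) = l1norm x.
Proof.
apply: eq_bigr => a _; congr `|_|.
rewrite /mxapply (bigD1 a) //= /compound (minor1 _ x0) eqxx mul1r big1 ?addr0 // => b nb.
by rewrite (minor1 _ x0) eq_sym (negbTE nb) mul0r.
Qed.

Unset Implicit Arguments.

Theorem theorem2p5 (R : realType) (n k : nat) (hk : (0 < k)%N) (hkn : (k <= n)%N) :
  (forall B : 'M[R[i]]_n, cols_l1_unit B ->
     forall c : R[i], l1_opnorm_is (compound k B) c -> c <= 1) /\
  (exists B : 'M[R[i]]_n, cols_l1_unit B /\ l1_opnorm_is (compound k B) 1).
Proof.
have x0 : 'I_n := Ordinal (leq_trans hk hkn).
split.
  move=> B hB c [hle [x [[i xi] heq]]].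
  have Lpos : 0 < l1norm x.
    rewrite /l1norm (bigD1 i) //=.
    apply: lt_le_trans (_ : 0 < `|x i|) _; first by rewrite normr_gt0.
    by rewrite lerDl sumr_ge0.
  have h := compound_l1 x0 hB x.
  rewrite heq in h.
  by rewrite -(ler_pM2r Lpos) mul1r.
have a0 : ksubset n k.
  exists [set widen_ord hkn i | i : 'I_k].
  rewrite card_imset ?card_ord //.
  by move=> i j /(congr1 val) /= => e; apply: val_inj.
have H : forall x : ksubset n k -> R[i],
    l1norm (mxapply (compound k (1%:M : 'M[R[i]]_n)) x) = l1norm x.
  by move=> x; apply: (compound1_l1 x0).
exists 1%:M; split.
  move=> j; rewrite (bigD1 j) //= big1 ?addr0.
    by rewrite mxE eqxx normr1.
  by move=> r nr; rewrite mxE (negbTE nr) normr0.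
split; first by move=> x; rewrite H mul1r.
exists (fun a => (a == a0)%:R); split; last by rewrite H mul1r.
by exists a0; rewrite eqxx oner_neq0.
Qed.
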